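(* Let $q\neq0$ and let $D\subseteq\mathbb C\setminus\{0\}$ satisfy $qD\subseteq D$. Suppose that for each integer $n\ge-1$ we are given functions $\tilde{\mathcal F}(\cdot;n),\tilde{\mathcal G}(\cdot;n):D\to\mathbb C$ and constants $\tilde\mu(n)$, with $\tilde\mu(-1)=0$ and $\tilde{\mathcal G}(z;-1)\neq0$ for all $z\in D$, satisfying for all $n\ge-1$ and $z\in D$ $$\tilde{\mathcal F}(qz;n+1)+\tilde{\mathcal G}(z;n+1)=\tilde{\mathcal F}(z;n)+\tilde{\mathcal G}(qz;n),$$ $$\tilde{\mathcal F}(z;n+1)\tilde{\mathcal G}(z;n+1)=\tilde{\mathcal F}(z;n)\tilde{\mathcal G}(z;n)+\tilde\mu(n)-\tilde\mu(n+1).$$ Define $\tilde{\mathcal P}_0\equiv1$ and, for $n\ge0$, $\tilde{\mathcal P}_{n+1}(z)=-\tilde{\mathcal G}(z;-1)\tilde{\mathcal P}_n(qz)+\tilde{\mathcal F}(z;n)\tilde{\mathcal P}_n(z)$. Then for every $n\ge0$: (i) $\tilde{\mathcal P}_n$ solves $$\tilde{\mathcal G}(qz;-1)\tilde{\mathcal P}_n(q^2z)-\big[\tilde{\mathcal F}(qz;n)+\tilde{\mathcal G}(z;n)\big]\tilde{\mathcal P}_n(qz)+\tilde{\mathcal F}(z;-1)\tilde{\mathcal P}_n(z)=0\quad(z\in D);$$ (ii) $-\tilde{\mathcal G}(z;-1)\tilde{\mathcal P}_{n+1}(qz)+\tilde{\mathcal G}(z;n)\tilde{\mathcal P}_{n+1}(z)=-\tilde\mu(n)\tilde{\mathcal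 P}_n(z)$; (iii) for $n\ge1$, $\tilde{\mathcal P}_{n+1}(z)+\tilde\mu(n-1)\tilde{\mathcal P}_{n-1}(z)=\big(\tilde{\mathcal F}(z;n)-\tilde{\mathcal G}(z;n-1)\big)\tilde{\mathcal P}_n(z)$. Moreover, if in addition there are constants $c_0(n),c_1(n)$ with $\tilde{\mathcal F}(z;n)-\tilde{\mathcal G}(z;n-1)=c_0(n)\chi(z)+c_1(n)$ for all $n\ge0$ and $z\in D$, then each $\tilde{\mathcal P}_n(z)$ is a polynomial in $\chi(z)$ of degree at most $n$.
   Context: $\chi(z)=\frac{z+z^{-1}}{2}$. The two displayed equations are the (q-version) Infeld–Hull factorization system: they express that, with $u_2(z)=-\tilde{\mathcal G}(z;-1)$, the operators $(u_2(z)\mathbf E_q+\tilde{\mathcal G}(z;n))(u_2(z)\mathbf E_q+\tilde{\mathcal F}(z;n))$ and $(u_2(z)\mathbf E_q+\tilde{\mathcal F}(z;n))(u_2(z)\mathbf E_q+\tilde{\mathcal G}(z;n))$ differ from consecutive members of one family of second-order operators by constants, where $(\mathbf E_qf)(z)=f(qz)$. *)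

(* Defs.v *)
From HB Require Import structures.
From mathcomp Require Import all_boot all_order all_algebra.
From mathcomp Require Import reals complex.
Set Implicit Arguments. Unset Strict Implicit. Unset Printing Implicit Defensive.
Import Order.TTheory GRing.Theory Num.Theory.
Local Open Scope ring_scope.

Definition chi (R : realType) (z : R[i]) : R[i] := (z + z^-1) / 2%:R.

(* tilde P_n, with F n z = tilde F(z;n), G n z = tilde G(z;n), n : int.
   P_0 = 1, P_{n+1}(z) = - G(z;-1) P_n(qz) + F(z;n) P_n(z). *)
Fixpoint Ptilde (R : realType) (q : R[i]) (F G : int -> R[i] -> R[i])
    (n : nat) (z : R[i]) {struct n} : R[i] :=
  match n with
  | 0%N => 1
  | m.+1 => - G (-1) z * Ptilde q F G m (q * z) + F (Posz m) z * Ptilde q F G m z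
  end.

(* Main.v *)
Require Import Defs.
From HB Require Import structures.
From mathcomp Require Import all_boot all_order all_algebra.
From mathcomp Require Import reals complex.
From mathcomp Require Import ring zify.
Import Order.TTheory GRing.Theory Num.Theory.
Local Open Scope ring_scope.

Theorem proposition2 (R : realType) (q : R[i]) (D : pred R[i])
    (F G : int -> R[i] -> R[i]) (mu : int -> R[i]) :
  q != 0 ->
  (forall z, z \in D -> z != 0) ->
  (forall z, z \in D -> q * z \in D) ->
  mu (-1) = 0 ->
  (forall z, z \in D -> G (-1) z != 0) ->
  (forall (n : int) z, -1 <= n -> z \in D ->
     F (n + 1) (q * z) + G (n + 1) z = F n z + G n (q * z)) ->
  (forall (n : int) z, -1 <= n -> z \in D ->
     F (n + 1) z * G (n + 1) z = F n z * G n z + mu n - mu (n + 1)) ->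
  let P := Ptilde q F G in
  (* (i) *)
  (forall (n : nat) z, z \in D ->
     G (-1) (q * z) * P n (q ^+ 2 * z)
     - (F n (q * z) + G n z) * P n (q * z) + F (-1) z * P n z = 0) /\
  (* (ii) *)
  (forall (n : nat) z, z \in D ->
     - G (-1) z * P n.+1 (q * z) + G n z * P n.+1 z = - mu n * P n z) /\
  (* (iii) *)
  (forall (n : nat) z, (1 <= n)%N -> z \in D ->
     P n.+1 z + mu (n%:Z - 1) * P n.-1 z = (F n z - G (n%:Z - 1) z) * P n z) /\
  (* moreover *)
  (forall c0 c1 : nat -> R[i],
     (forall (n : nat) z, z \in D -> F n z - G (n%:Z - 1) z = c0 n * chi z + c1 n) ->
     forall n : nat, exists p : {poly R[i]},
       (size p <= n.+1)%N /\ forall z, z \in D -> P n z = p.[chi z]).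
Proof.
move=> q0 Dnz Dq mu1 gnz H1 H2 P.
have e1 : (-1 : int) + 1 = 0 by [].
have eS : forall m : nat, (m%:Z + 1) = m.+1%:Z by move=> m; rewrite -addn1 PoszD.
have le1 : forall m : nat, (-1 : int) <= m%:Z by [].
have H1m : forall z, z \in D -> F 0 (q*z) + G 0 z = F (-1) z + G (-1) (q*z).
  by move=> z Dz; have := H1 (-1) z (lexx _) Dz; rewrite e1.
have H1n : forall (m:nat) z, z \in D ->
    F m.+1 (q*z) + G m.+1 z = F m z + G m (q*z).
  by move=> m z Dz; have := H1 m z (le1 m) Dz; rewrite eS.
have T : forall (m:nat) z, z \in D -> F m z * G m z = F (-1) z * G (-1) z - mu m.
  elim=> [|m IH] z Dz.
    by have := H2 (-1) z (lexx _) Dz; rewrite e1 mu1 addr0.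
  have := H2 m z (le1 m) Dz; rewrite eS => ->; rewrite IH //; ring.
have PS : forall (n : nat) z, P n.+1 z = - G (-1) z * P n (q*z) + F n z * P n z by [].
pose L := fun (n : nat) z => G (-1) (q * z) * P n (q ^+ 2 * z)
     - (F n (q * z) + G n z) * P n (q * z) + F (-1) z * P n z.
have ii_of_i : forall (n:nat) z, z \in D -> L n z = 0 ->
    - G (-1) z * P n.+1 (q * z) + G n z * P n.+1 z = - mu n * P n z.
  move=> n z Dz Lz.
  have -> : - G (-1) z * P n.+1 (q * z) + G n z * P n.+1 z =
     G (-1) z * L n z + (F n z * G n z - F (-1) z * G (-1) z) * P n z.
    by rewrite /L !PS expr2 -mulrA; ring.
  by rewrite Lz T //; ring.
have Li : forall n z, z \in D -> L n z = 0.
  elim=> [|n IH] z Dz.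
    rewrite /L /= !mulr1 H1m //; ring.
  have Dqz := Dq z Dz.
  have iiz := ii_of_i n z Dz (IH z Dz).
  have iiqz := ii_of_i n _ Dqz (IH _ Dqz).
  apply: (mulfI (gnz z Dz)); rewrite mulr0.
  have -> : G (-1) z * L n.+1 z =
      - G (-1) z * (- G (-1) (q * z) * P n.+1 (q * (q * z)) + G n (q * z) * P n.+1 (q * z))
      + F n z * (- G (-1) z * P n.+1 (q * z) + G n z * P n.+1 z)
      + (F (-1) z * G (-1) z - F n z * G n z) * P n.+1 z.
    rewrite /L expr2 -mulrA H1n //; ring.
  rewrite iiz iiqz T // PS; ring.
have ii : forall (n : nat) z, z \in D ->
     - G (-1) z * P n.+1 (q * z) + G n z * P n.+1 z = - mu n * P n z.
  by move=> n z Dz; apply: ii_of_i => //; apply: Li.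
have iii : forall (n : nat) z, (1 <= n)%N -> z \in D ->
     P n.+1 z + mu (n%:Z - 1) * P n.-1 z = (F n z - G (n%:Z - 1) z) * P n z.
  case=> [//|m] z _ Dz.
  have e : (m.+1%:Z - 1) = m%:Z by rewrite -eS addrK.
  rewrite e /= PS.
  have h := ii m z Dz.
  have -> : mu m * P m z = - (- mu m * P m z) by rewrite mulNr opprK.
  rewrite -h; ring.
split; first by move=> n z Dz; exact: (Li n z Dz).
split; first exact: ii.
split; first exact: iii.
move=> c0 c1 Hc n.
suff : exists p1 p2 : {poly R[i]}, (size p1 <= n.+1)%N /\ (size p2 <= n.+2)%N /\
    forall z, z \in D -> P n z = p1.[chi z] /\ P n.+1 z = p2.[chi z].
  by case=> p1 [p2 [s1 [_ h]]]; exists p1; split => // z Dz; case: (h z Dz).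
have sa : forall m, (size (c0 m *: ('X : {poly R[i]}) + (c1 m)%:P)%R <= 2)%N.
  move=> m; apply: leq_trans (size_add _ _) _; rewrite geq_max; apply/andP; split.
    by apply: leq_trans (size_scale_leq _ _) _; rewrite size_polyX.
  by apply: leq_trans (size_polyC_leq1 _) _.
elim: n => [|n [p1 [p2 [s1 [s2 h]]]]].
  exists 1, (c0 0%N *: 'X + (c1 0%N)%:P); split; first by rewrite size_poly1.
  split; first exact: sa.
  move=> z Dz; split; first by rewrite hornerE.
  rewrite PS /= !mulr1 hornerE hornerZ hornerX hornerC.
  have := Hc 0%N z Dz; rewrite (_ : (0%:Z - 1) = -1) // => <-; ring.
exists p2, ((c0 n.+1 *: 'X + (c1 n.+1)%:P) * p2 - mu n *: p1).
split => //; split.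
  apply: leq_trans (size_add _ _) _; rewrite geq_max; apply/andP; split.
    apply: leq_trans (size_mul_leq _ _) _.
    move: (leq_add (sa n.+1) s2); case: (_ + _)%N => //.
  rewrite size_opp; apply: leq_trans (size_scale_leq _ _) _; apply: leq_trans s1 _; by rewrite leqW // leqnSn.
move=> z Dz; case: (h z Dz) => h1 h2; split => //.
have := iii n.+1 z isT Dz.
have e : (n.+1%:Z - 1) = n%:Z by rewrite -eS addrK.
rewrite Hc // e /= => hh.
have hh2 : P n.+2 z = (c0 n.+1 * chi z + c1 n.+1) * P n.+1 z - mu n * P n z.
  by rewrite -hh addrK.
rewrite hh2 hornerD hornerN hornerZ hornerM hornerD hornerZ hornerX hornerC -h1 -h2.
ring.
Qed.
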